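(* Let $G$ be a connected graph with no Hamiltonian path, and let $T$ be a spanning tree of $G$ satisfying (C1) and (C2). Let $b,r\in B(T)$ be such that $V(P_T[b,r])\cap B(T)=\{b,r\}$, orient $P_T[b,r]$ from $b$ to $r$, and let $s\in L(T)$. If $sx\in E(G)$ for some $x\in V(P_T[b,r])\setminus\{b\}$, then $sx^-\notin E(G)$, where $x^-$ is the predecessor of $x$ on $P_T[b,r]$.
   Context: All graphs are finite and simple. For a tree $T$, $L(T)$ is the set of leaves (degree-one vertices) and $B(T)$ the set of branch vertices (degree at least three); $P_T[u,v]$ is the unique path in $T$ between $u$ and $v$. Since $G$ has no Hamiltonian path, every spanning tree of $G$ has a branch vertex. Reducible stem: for a tree $T$ with $B(T)\neq\emptyset$ and each leaf $x\in L(T)$, let $y_x\in B(T)$ be the branch vertex such that the path $P_T[x,y_x]$ contains no branch vertex other than $y_x$; deleting $V(P_T[x,y_x])\setminus\{y_x\}$ from $T$ for all $x\in L(T)$ yields a subtree $R\_Stem(T)$. Condition (C1): $|L(T)|$ is minimum among all spanning trees of $G$. Condition (C2): subject to (C1), $|V(R\_Stem(T))|$ is maximum. *)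

(* Defs.v *)
(* finite simple graphs as symmetric irreflexive relations. *)
From mathcomp Require Import all_boot.
From mathcomp Require Import boolp.
Set Implicit Arguments. Unset Strict Implicit. Unset Printing Implicit Defensive.

Section Graphs.
Variable V : finType.

Definition connected_graph (G : rel V) : Prop := forall x y, connect G x y.

Definition has_ham_path (G : rel V) : Prop :=
  exists x (p : seq V), [/\ path G x p, uniq (x :: p) & forall v, v \in x :: p].

Definition acyclic (T : rel V) : Prop :=
  forall c : seq V, uniq c -> 3 <= size c -> ~~ cycle T c.

Definition spanning_tree (G T : rel V) : Prop :=
  [/\ symmetric T, subrel T G, connected_graph T & acyclic T].

Definition deg (T : rel V) (x : V) : nat := #|[set y | T x y]|.
Definition leaf (T : rel V) (x : V) : bool := deg T x == 1.
Definition branch (T : rel V) (x : V) : bool := 3 <= deg T x.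
Definition nleaves (T : rel V) : nat := #|[set x | leaf T x]|.

(* u :: p is the vertex sequence of a path of T from u to v
   (in a tree this is the unique path P_T[u,v]) *)
Definition is_tpath (T : rel V) (u v : V) (p : seq V) : bool :=
  [&& path T u p, last u p == v & uniq (u :: p)].

(* v is deleted when forming R_Stem(T): v lies on P_T[x, y_x] minus y_x for
   some leaf x, where y_x is a branch vertex and P_T[x,y_x] has no branch
   vertex other than y_x.  belast x p = vertices of the path except y. *)
Definition stem_removed (T : rel V) (v : V) : Prop :=
  exists x y (p : seq V),
    [/\ leaf T x, branch T y, is_tpath T x y p,
        all (fun w => ~~ branch T w) (belast x p) & v \in belast x p].

Definition rstem_card (T : rel V) : nat :=
  #|[set v | `[< ~ stem_removed T v >]]|.

Definition C1 (G T : rel V) : Prop :=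
  forall T', spanning_tree G T' -> nleaves T <= nleaves T'.

Definition C2 (G T : rel V) : Prop :=
  forall T', spanning_tree G T' -> nleaves T' = nleaves T ->
    rstem_card T' <= rstem_card T.

End Graphs.

(* Main.v *)
Require Import Defs.
From mathcomp Require Import all_boot.
From mathcomp Require Import boolp.
Set Implicit Arguments. Unset Strict Implicit. Unset Printing Implicit Defensive.

Section Proof.
Variables (V : finType) (G T : rel V) (b r s w : V) (p : seq V) (i : nat).
Hypotheses (Gsym : symmetric G) (Girr : irreflexive G).
Hypotheses (Tsym : symmetric T) (TG : subrel T G) (Tconn : connected_graph T)
  (Tacyc : acyclic T).
Hypotheses (brb : branch T b) (brr : branch T r).
Hypotheses (Pp : path T b p) (Plast : last b p = r) (Puniq : uniq (b :: p)).
Hypothesis Pbr : forall v, v \in b :: p -> branch T v -> v = b \/ v = r.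
Hypothesis Nw : forall y, T s y = (y == w).
Hypothesis hi : i.+1 < size (b :: p).
Hypotheses (Gsx : G s (nth b (b :: p) i.+1)) (Gsxm : G s (nth b (b :: p) i)).

Local Notation P := (b :: p).
Local Notation n := (size p).
Local Notation xm := (nth b (b :: p) i).
Local Notation x := (nth b (b :: p) i.+1).

Lemma Tirr v : T v v = false.
Proof. by apply/negP => /TG; rewrite Girr. Qed.

Lemma Tsw : T s w.
Proof. by rewrite Nw. Qed.

Lemma ws : w != s.
Proof. by apply/eqP => e; have := Tsw; rewrite e Tirr. Qed.

Lemma degs : deg T s = 1.
Proof.
rewrite /deg (_ : [set y | T s y] = [set w]) ?cards1 //.
by apply/setP => y; rewrite !inE Nw.
Qed.

Lemma nthP j : j <= n -> nth b P j \in P.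
Proof. by move=> hj; rewrite mem_nth. Qed.

Lemma nth_eq j k : j <= n -> k <= n -> (nth b P j == nth b P k) = (j == k).
Proof. by move=> hj hk; rewrite nth_uniq. Qed.

Lemma rE : r = nth b P n.
Proof. by rewrite -Plast -[n]/((size P).-1) nth_last. Qed.

Lemma Tnext j : j < n -> T (nth b P j) (nth b P j.+1).
Proof. by move=> hj; move/(pathP b): Pp => /(_ j hj). Qed.

Definition inner v := (v \in P) && ~~ branch T v.

Lemma pv_cases j : j <= n -> nth b P j = b \/ nth b P j = r \/ (0 < j < n).
Proof.
move=> hj; case: j hj => [|j] hj; first by left.
case: (ltnP j.+1 n) => h; first by right; right.
by right; left; rewrite rE; congr nth; apply/eqP; rewrite eqn_leq hj h.
Qed.

Lemma inner_nbr j : 0 < j < n -> ~~ branch T (nth b P j).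
Proof.
case/andP=> j0 jn; apply/negP => bv.
case: (Pbr (nthP (ltnW jn)) bv) => e.
  by move: e => /eqP; rewrite -[X in _ == X]/(nth b P 0) nth_eq // ?(ltnW jn) // => /eqP e0; move: j0; rewrite e0.
by move: e => /eqP; rewrite rE nth_eq ?(ltnW jn) // (ltn_eqF jn).
Qed.

Lemma inner_set j : 0 < j < n ->
  [set y | T (nth b P j) y] = [set nth b P j.-1; nth b P j.+1].
Proof.
move=> hj; have /andP[j0 jn] := hj.
have hb := inner_nbr hj; move: hb; rewrite /branch -ltnNge ltnS => hd.
apply/esym/eqP; rewrite eqEcard; apply/andP; split.
  apply/subsetP => y; rewrite !inE => /orP[] /eqP ->.
    by rewrite Tsym -{2}(prednK j0); apply: Tnext; rewrite (prednK j0) (ltnW jn).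
  exact: Tnext.
rewrite cards2 nth_eq ?(leq_trans (leq_pred j) (ltnW jn)) //.
rewrite (_ : (j.-1 == j.+1) = false) //; apply/negbTE.
by rewrite -(prednK j0) neq_ltn /= ltnS leqnSn.
Qed.

Lemma inner_T j y : 0 < j < n ->
  T (nth b P j) y = (y == nth b P j.-1) || (y == nth b P j.+1).
Proof. by move=> hj; move: (inner_set hj) => /setP /(_ y); rewrite !inE. Qed.

Lemma inner_deg j : 0 < j < n -> deg T (nth b P j) = 2.
Proof.
move=> hj; have /andP[j0 jn] := hj.
rewrite /deg inner_set // cards2 nth_eq ?(leq_trans (leq_pred j) (ltnW jn)) //.
by rewrite -(prednK j0) neq_ltn /= ltnS leqnSn.
Qed.

Lemma innerP v : inner v -> exists2 j, 0 < j < n & v = nth b P j.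
Proof.
case/andP=> vP nb; exists (index v P); last by rewrite nth_index.
have : index v P <= n by rewrite -ltnS -[n.+1]/(size P) index_mem.
move=> /pv_cases; rewrite nth_index //.
by case=> [e|[e|//]]; move: nb; rewrite e ?brb ?brr.
Qed.

Lemma inner_nth j : 0 < j < n -> inner (nth b P j).
Proof. by move=> hj; rewrite /inner inner_nbr // nthP // ltnW //; case/andP: hj. Qed.

Lemma s_notP : s \notin P.
Proof.
apply/negP => sP.
case: (boolP (branch T s)) => bs.
  by move: bs; rewrite /branch degs.
have : inner s by rewrite /inner sP bs.
by case/innerP => j hj e; move: degs; rewrite e inner_deg.
Qed.

Lemma pv_ns j : j <= n -> nth b P j != s.
Proof. by move=> hj; apply: contraNneq s_notP => <-; apply: nthP. Qed.

Definition T' u v :=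
  if u == s then (v == xm) || (v == x)
  else if v == s then (u == xm) || (u == x)
  else T u v && ~~ (((u == xm) && (v == x)) || ((u == x) && (v == xm))).

Lemma xms : xm != s. Proof. by apply: pv_ns; rewrite -ltnS ltnW. Qed.
Lemma xs : x != s. Proof. by apply: pv_ns. Qed.
Lemma xmx : xm != x.
Proof. by rewrite nth_eq // ?(ltn_eqF (ltnSn i)) // -ltnS ltnW. Qed.

Lemma T'sym : symmetric T'.
Proof.
move=> u v; rewrite /T'.
case: (u =P s) => [eu|us]; case: (v =P s) => [ev|vs] //; rewrite ?eu ?ev //.
by rewrite [T u v]Tsym [X in _ = _ && ~~ X]orbC !(andbC (v == _)).
Qed.

Lemma T'G : subrel T' G.
Proof.
move=> u v; rewrite /T'.
case: (u =P s) => [->|us]; first by case/orP=> /eqP ->.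
case: (v =P s) => [->|vs]; first by case/orP=> /eqP ->; rewrite Gsym.
by case/andP=> /TG.
Qed.

Lemma T'T u v : u != s -> v != s -> T' u v -> T u v.
Proof. by rewrite /T' => /negbTE -> /negbTE -> /andP[]. Qed.

Lemma T's y : T' s y = (y == xm) || (y == x).
Proof. by rewrite /T' eqxx. Qed.

Lemma T'conn_edge u v : u != s -> v != s -> T u v -> connect T' u v.
Proof.
move=> us vs uv.
have xmsx : connect T' xm x.
  apply: (@connect_trans _ _ s); apply: connect1; first by rewrite T'sym T's eqxx.
  by rewrite T's eqxx orbT.
case: (boolP (((u == xm) && (v == x)) || ((u == x) && (v == xm)))).
  case/orP=> /andP[/eqP eu /eqP ev]; rewrite eu ev //.
  by rewrite (sym_connect_sym T'sym).
by move=> h; apply: connect1; rewrite /T' (negbTE us) (negbTE vs) uv h.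
Qed.

Lemma path_s_w u q : path T u q -> s \in q -> s != last u q -> w \in q.
Proof.
elim: q u => [//|a q IH] u /= /andP[ua aq].
rewrite inE; case: (s =P a) => [as_|_] /=.
  case: q aq IH => [|c q] /=; first by rewrite as_ eqxx.
  by rewrite -as_ Nw => /andP[/eqP -> _] _ _; rewrite !inE eqxx orbT.
by move=> sq sl; rewrite inE (IH a aq sq sl) orbT.
Qed.

Lemma path_T' u q : all (fun v => v != s) (u :: q) -> path T u q -> connect T' u (last u q).
Proof.
elim: q u => [|a q IH] u /=; first by rewrite connect0.
case/and3P=> us as_ rest /andP[ua aq].
apply: (connect_trans (T'conn_edge us as_ ua)).
by apply: IH => //=; rewrite as_.
Qed.

Lemma conn_w u : connect T' w u.
Proof.
have gen : forall v, v != s -> connect T' w v.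
  move=> v vs; case/connectP: (Tconn w v) => q hq ev; rewrite ev in vs *.
  case/shortenP: hq vs => q' hq' uq' _ vs.
  apply: path_T' => //.
  have sq' : s \notin q'.
    apply/negP => sq; have := path_s_w hq' sq.
    rewrite eq_sym => /(_ vs) wq; by move: uq' => /= /andP[/negP].
  apply/allP => z; rewrite inE => /orP[/eqP ->|zq]; first exact: ws.
  by apply: contraNneq sq' => <-.
case: (u =P s) => [->|/eqP us]; last exact: gen.
apply: (connect_trans (gen _ xs)); apply: connect1; by rewrite T'sym T's eqxx orbT.
Qed.

Lemma T'connected : connected_graph T'.
Proof.
move=> u v; apply: (@connect_trans _ _ w); last exact: conn_w.
by rewrite (sym_connect_sym T'sym) conn_w.
Qed.

Lemma pair_key (a z u v : V) : (a == u) || (a == v) -> (z == u) || (z == v) -> a != z ->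
  ((a == u) && (z == v)) || ((a == v) && (z == u)).
Proof.
by case/orP=> /eqP -> /orP[]/eqP ->; rewrite ?eqxx //= ?andbT ?orbT.
Qed.

Lemma T'acyclic : acyclic T'.
Proof.
move=> c uc sc; apply/negP => cc.
have subT : {in predC1 s &, subrel T' T} by move=> u v hu hv; apply: T'T.
case: (boolP (s \in c)) => sc'; last first.
  have : cycle T c.
    apply: (sub_in_cycle subT) cc; apply/allP => z zc /=.
    by apply: contraNneq sc' => <-.
  by apply/negP; apply: Tacyc.
case: (rot_to sc') => k q ec.
have uc' : uniq (s :: q) by rewrite -ec rot_uniq.
have cc' : cycle T' (s :: q) by rewrite -ec rot_cycle.
have sz : 3 <= size (s :: q) by rewrite -ec size_rot.
case: q ec uc' cc' sz => [|a q1] // _ uc' cc' sz.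
move: cc'; rewrite /= rcons_path => /and3P[sa aq1 ls].
case: q1 aq1 ls uc' sz => [|c1 q2] // aq1 ls uc' sz.
set q1 := c1 :: q2 in aq1 ls uc' sz *.
set z := last a q1 in ls.
move: uc'; rewrite /= !inE negb_or => /andP[/andP[sa' sq1] /andP[aq1' uq1]].
have zq1 : z \in q1 by rewrite /z /q1 /= mem_last.
have az : a != z by apply: contraNneq aq1' => ->.
have ha : (a == xm) || (a == x) by rewrite -T's.
have hz : (z == xm) || (z == x) by rewrite -T's T'sym.
have key : ((a == xm) && (z == x)) || ((a == x) && (z == xm)).
  exact: pair_key.
have allq : all (predC1 s) (a :: q1).
  apply/allP => u; rewrite inE => /orP[/eqP ->|uq]; first by rewrite /= eq_sym.
  by rewrite /=; apply: contraNneq sq1 => <-.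
have pT : path T a q1 := sub_in_path subT allq aq1.
have Tza : T z a.
  have Txmx : T xm x by apply: Tnext; rewrite -ltnS.
  by case/orP: key => /andP[/eqP -> /eqP ->]; rewrite // Tsym.
have : cycle T (a :: q1) by rewrite /cycle rcons_path pT Tza.
apply/negP; apply: Tacyc; first by rewrite /= aq1' uq1.
have nq2 : q2 != [::].
  apply/eqP => q2e; move: key aq1; rewrite /z /q1 q2e /= andbT => key.
  rewrite /T' eq_sym (negbTE sa') (negbTE (_ : c1 != s)); last first.
    by apply: contraNneq sq1 => <-; rewrite eqxx.
  by rewrite key andbF.
by rewrite /q1; case: (q2) nq2.
Qed.

Lemma T'tree : spanning_tree G T'.
Proof. by split; [exact: T'sym|exact: T'G|exact: T'connected|exact: T'acyclic]. Qed.

Lemma degT's : deg T' s = 2.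
Proof.
rewrite /deg (_ : [set y | T' s y] = [set xm; x]) ?cards2 ?xmx //.
by apply/setP => y; rewrite !inE T's.
Qed.

Lemma card_swap (N : {set V}) a : a \in N -> a != s ->
  #|s |: (N :\ a :\ s)| + (s \in N) = #|N|.
Proof.
move=> aN as_.
rewrite cardsU1 !inE eqxx /= (cardsD1 a N) aN (cardsD1 s (N :\ a)) !inE eq_sym as_ /=.
by rewrite -addnA [_ + (s \in N)]addnC.
Qed.

Lemma degT'v v : v != s -> deg T' v + (T v s) = deg T v.
Proof.
move=> vs; rewrite /deg.
have hT' : forall y, T' v y = if y == s then (v == xm) || (v == x)
   else T v y && ~~ (((v == xm) && (y == x)) || ((v == x) && (y == xm))).
  by move=> y; rewrite /T' (negbTE vs).
have sN : (s \in [set y | T v y]) = T v s by rewrite inE.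
case: (v =P xm) => [vxm|nxm].
  rewrite -sN -[RHS](card_swap (N := [set y | T v y]) (a := x)); last exact: xs.
    congr (_ + _); apply: eq_card => y; rewrite !inE hT' vxm eqxx (negbTE xmx) andTb andFb orbF.
    by case: eqP => _ //=; rewrite orbF andbC.
  by rewrite inE vxm; apply: Tnext; rewrite -ltnS.
case: (v =P x) => [vx|nx].
  rewrite -sN -[RHS](card_swap (N := [set y | T v y]) (a := xm)); last exact: xms.
    congr (_ + _); apply: eq_card => y; rewrite !inE hT' vx eqxx orbT [x == xm]eq_sym (negbTE xmx) andFb orFb andTb.
    by case: eqP => _ //=; rewrite andbC.
  by rewrite inE vx Tsym; apply: Tnext; rewrite -ltnS.
rewrite -sN (cardsD1 s [set y | T v y]) addnC; congr (_ + _).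
apply: eq_card => y; rewrite !inE hT'.
have -> : (v == xm) = false by apply/eqP.
have -> : (v == x) = false by apply/eqP.
by case: (y =P s) => //=; rewrite andbT.
Qed.

Lemma Tvs v : T v s = (v == w). Proof. by rewrite Tsym Nw. Qed.

Lemma deg_other v : v != s -> v != w -> deg T' v = deg T v.
Proof. by move=> vs vw; rewrite -(degT'v vs) Tvs (negbTE vw) addn0. Qed.

Lemma deg_w : deg T' w + 1 = deg T w.
Proof. by rewrite -(degT'v ws) Tvs eqxx. Qed.

Lemma leaves_lt : deg T w != 2 -> nleaves T' < nleaves T.
Proof.
move=> hw; rewrite /nleaves; apply: proper_card; apply/properP; split.
  apply/subsetP => v; rewrite !inE /leaf.
  case: (v =P s) => [->|/eqP vs]; first by rewrite degT's.
  case: (v =P w) => [->|/eqP vw]; last by rewrite deg_other.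
  by move=> /eqP h; move: hw; rewrite -deg_w h.
by exists s; rewrite !inE /leaf ?degs ?degT's.
Qed.

Section C2case.
Hypothesis hw2 : deg T w = 2.

Lemma degw' : deg T' w = 1.
Proof. by apply/eqP; rewrite -(eqn_add2r 1) deg_w hw2. Qed.

Lemma branch_eq v : branch T' v = branch T v.
Proof.
rewrite /branch; case: (v =P s) => [->|/eqP vs]; first by rewrite degT's degs.
case: (v =P w) => [->|/eqP vw]; first by rewrite degw' hw2.
by rewrite deg_other.
Qed.

Lemma leaves_eq : nleaves T' = nleaves T.
Proof.
rewrite /nleaves (_ : [set v | leaf T' v] = w |: ([set v | leaf T v] :\ s)).
  rewrite cardsU1 !inE /leaf hw2 /= [in RHS](cardsD1 s) inE /leaf degs.
  by rewrite andbF.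
apply/setP => v; rewrite !inE /leaf.
case: (v =P w) => [->|/eqP vw]; first by rewrite degw'.
case: (v =P s) => [->|/eqP vs]; first by rewrite degT's.
by rewrite deg_other.
Qed.

End C2case.

Definition S v := (v == s) || inner v.

Lemma pv_S j : j <= n -> S (nth b P j) || (nth b P j == b) || (nth b P j == r).
Proof.
move=> hj; case: (pv_cases hj) => [->|[->|h]]; rewrite ?eqxx ?orbT //.
by rewrite /S inner_nth // orbT.
Qed.

Lemma S_close v y : S v -> T' v y -> S y || (y == b) || (y == r).
Proof.
case/orP=> [/eqP -> | iv].
  rewrite T's => /orP[]/eqP ->; apply: pv_S => //; by rewrite -ltnS ltnW.
have vs : v != s by apply: contraNneq s_notP => <-; case/andP: iv.
case: (innerP iv) => j hj ev; rewrite /T' (negbTE vs).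
case: (y =P s) => [->|_]; first by rewrite /S eqxx.
case/andP=> /[swap] _; rewrite ev inner_T // => /orP[]/eqP ->; apply: pv_S.
  by case/andP: hj => _ /ltnW; apply: leq_trans; apply: leq_pred.
by case/andP: hj.
Qed.

Lemma S_nb v : S v -> ~~ branch T v.
Proof. by case/orP=> [/eqP ->|/andP[]//]; rewrite /branch degs. Qed.

Lemma leg_avoid h q : ~~ S h -> path T' h q ->
  all (fun u => ~~ branch T u) (belast h q) -> all (fun u => ~~ S u) (belast h q).
Proof.
elim: q h => [//|a q IH] h hS /= /andP[ha aq] /andP[hb rest].
rewrite hS /=; case: q IH aq rest => [//|c q] IH aq rest.
apply: IH => //; move: rest => /= /andP[ab _].
apply/negP => Sa; have := S_close Sa (_ : T' a h); rewrite T'sym ha => /(_ isT).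
rewrite (negbTE hS) /= => /orP[]/eqP hE; move: hb; by rewrite hE ?brb ?brr.
Qed.

Lemma SR_s : stem_removed T s.
Proof.
case/connectP: (Tconn s b) => q0 hq0 eb.
have brb0 := brb; rewrite eb in brb0; case/shortenP: hq0 brb0 => q hq uq _ brb'.
have bs : last s q != s by apply: contraTneq brb' => ->; rewrite /branch degs.
have hasb : has (branch T) q.
  apply/hasP; exists (last s q) => //.
  by move: (mem_last s q); rewrite inE (negbTE bs).
have jq : find (branch T) q < size q by rewrite -has_find.
set j := find (branch T) q in jq *.
exists s, (nth s q j), (take j.+1 q); split.
- by rewrite /leaf degs.
- exact: nth_find.
- rewrite /is_tpath take_path //= (take_nth s jq) last_rcons eqxx /=.
  by rewrite -(take_nth s jq); have := take_uniq j.+2 uq.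
- rewrite (take_nth s jq) belast_rcons /= /branch degs /=.
  apply/allP => u /(seq.nthP s) [k]; rewrite size_take jq => hk <-.
  by rewrite nth_take //; have := before_find s hk; rewrite /branch => ->.
- by rewrite (take_nth s) // belast_rcons mem_head.
Qed.

Lemma inner_nw v : inner v -> v != w.
Proof.
case/innerP => j hj ->; apply/negP => /eqP e.
have : T (nth b P j) s by rewrite Tvs e.
rewrite inner_T // => /orP[]; rewrite eq_sym.
  by apply/negP; apply: pv_ns; case/andP: hj => _ /ltnW; apply: leq_trans; apply: leq_pred.
by apply/negP; apply: pv_ns; case/andP: hj.
Qed.

Lemma SR_transfer v : deg T w = 2 -> stem_removed T' v -> stem_removed T v /\ v != s.
Proof.
move=> hw2 [x' [y' [q [lx by' hp allb vin]]]].
move: hp => /and3P[pq /eqP lq uq].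
rewrite branch_eq // in by'.
have allbT : all (fun u => ~~ branch T u) (belast x' q).
  by apply/allP => u /(allP allb); rewrite branch_eq.
have hx' : ~~ S x'.
  apply/negP => /orP[/eqP e|ix]; first by move: lx; rewrite e /leaf degT's.
  have x's : x' != s by apply: contraNneq s_notP => <-; case/andP: ix.
  move: lx; rewrite /leaf deg_other // ?inner_nw //.
  by case/innerP: ix => j hj ->; rewrite inner_deg.
have havoid := leg_avoid hx' pq allbT.
have yS : ~~ S y' by apply: contraL by' => /S_nb.
have alls : all (fun u => u != s) (x' :: q).
  rewrite lastI all_rcons lq; apply/andP; split.
    by apply: contra yS => /eqP ->; rewrite /S eqxx.
  by apply/allP => u /(allP havoid); apply: contra => /eqP ->; rewrite /S eqxx.
have subT : {in predC1 s &, subrel T' T} by move=> u z hu hz; apply: T'T.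
have pT : path T x' q := sub_in_path subT alls pq.
split; last first.
  by apply: contra (allP havoid v vin) => /eqP ->; rewrite /S eqxx.
case: (x' =P w) => [ew|/eqP xw].
  exists s, y', (w :: q); split => //.
  - by rewrite /leaf degs.
  - rewrite /is_tpath /= Tsw -ew pT /= lq eqxx /=.
    move: uq => /= /andP[-> ->]; rewrite andbT.
    by rewrite andbT; apply/negP => hs; move: (allP alls s hs); rewrite eqxx.
  - by rewrite /= {1}/branch degs /= -ew.
  - by rewrite /= in_cons -ew vin orbT.
exists x', y', q; split => //.
- move: lx; rewrite /leaf deg_other //.
  by move: alls => /= /andP[].
- by rewrite /is_tpath pT lq eqxx uq.
Qed.

Lemma main_false : C1 G T -> C2 G T -> False.
Proof.
move=> hC1 hC2.
case: (deg T w =P 2) => [hw|/eqP hw]; last first.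
  by have := hC1 _ T'tree; rewrite leqNgt leaves_lt.
have := hC2 _ T'tree (leaves_eq hw); apply/negP; rewrite -ltnNge.
rewrite /rstem_card; apply: proper_card; apply/properP; split.
  apply/subsetP => v; rewrite !inE => /asboolP h; apply/asboolP => h'.
  by apply: h; case: (SR_transfer hw h').
exists s; rewrite !inE.
  by apply/asboolP => h'; case: (SR_transfer hw h'); rewrite eqxx.
by apply/negP => /asboolP; apply; apply: SR_s.
Qed.

End Proof.

Theorem claim4p3 (V : finType) (G T : rel V) (b r s : V) (p : seq V) :
  symmetric G -> irreflexive G ->
  connected_graph G -> ~ has_ham_path G ->
  spanning_tree G T -> C1 G T -> C2 G T ->
  branch T b -> branch T r -> is_tpath T b r p ->
  (forall v, v \in b :: p -> branch T v -> v = b \/ v = r) ->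
  leaf T s ->
  forall i, i.+1 < size (b :: p) ->
    G s (nth b (b :: p) i.+1) -> ~~ G s (nth b (b :: p) i).
Proof.
move=> Gsym Girr _ _ [Tsym TG Tconn Tacyc] hC1 hC2 brb brr /and3P[Pp /eqP Pl Pu] Pbr ls i hi Gsx.
apply/negP => Gsxm.
move: ls; rewrite /leaf /deg => /cards1P [w hw].
have Nw : forall y, T s y = (y == w).
  by move=> y; move/setP: hw => /(_ y); rewrite !inE.
exact: (main_false Gsym Girr Tsym TG Tconn Tacyc brb brr Pp Pl Pu Pbr Nw hi Gsx Gsxm hC1 hC2).
Qed.
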